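(* Let $x \in X$ and $\gamma > 0$, and set \[ x^+ := P_x(\gamma F(x)), \qquad \phi_\gamma(x) := F(x) - F(x^+) + \frac{1}{\gamma}\left[\nabla\omega(x^+) - \nabla\omega(x)\right]. \] (a) $\tilde g(x^+, \phi_\gamma(x)) \le 0$ for any $x \in X$ and $\gamma > 0$. (b) If $\omega$ has ${\cal Q}$-Lipschitz continuous gradients w.r.t. $\|\cdot\|$, i.e. $\|\nabla\omega(x) - \nabla\omega(z)\|_* \le {\cal Q}\|x-z\|$ for all $x,z\in X$, and $F$ is Hölder continuous, i.e. $\|F(x)-F(y)\|_* \le L\|x-y\|^\nu$ for all $x,y \in X$ for some $\nu \in (0,1]$ and $L>0$, then \[ \|\phi_\gamma(x)\|_* \le L\left[\gamma\|R_\gamma(x)\|\right]^\nu + {\cal Q}\|R_\gamma(x)\|. \] (c) If, in addition to the hypotheses of (b), the set $X$ is bounded, then \[ g(x^+) \le 2\,\Omega_{\omega,X}\left[L\gamma^\nu\|R_\gamma(x)\|^\nu + {\cal Q}\|R_\gamma(x)\|\right]. \]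
   Context: $\mathbb{R}^n$ carries an inner product $\langle\cdot,\cdot\rangle$ and a norm $\|\cdot\|$ (not necessarily induced by the inner product), with dual norm $\|\cdot\|_*$. $X \subseteq \mathbb{R}^n$ is a nonempty closed convex set and $F: X \to \mathbb{R}^n$ is continuous. A distance generating function with modulus $\alpha>0$ w.r.t. $\|\cdot\|$ is a function $\omega: X \to \mathbb{R}$ that is convex and continuous on $X$, such that $X^o = \{x \in X : \partial\omega(x) \neq \emptyset\}$ is convex, and such that $\omega$ restricted to $X^o$ is continuously differentiable and satisfies $\langle \nabla\omega(x') - \nabla\omega(x), x' - x\rangle \ge \alpha\|x'-x\|^2$ for all $x, x' \in X^o$. Fix such an $\omega$. $V(x,z) = \omega(z) - \omega(x) - \langle \nabla\omega(x), z - x\rangle$, $P_x(\phi) = \arg\min_{z \in X}\{\langle \phi, z\rangle + V(x,z)\}$, and $R_\gamma(x) = \frac{1}{\gamma}[x - P_x(\gamma F(x))]$. Gap functions: $g(x) = \sup_{z\in X}\langle F(x), x - z\rangle$ and $\tilde g(x,\phi) = \sup_{z \in X}\langle F(x) + \phi, x - z\rangle$. Further $D_{\omega,X} = \sqrt{\max_{x\in X}\omega(x) - \min_{x\in X}\omega(x)}$ and $\Omega_{\omega,X} = \sqrt{2/\alpha}\,D_{\omega,X}$. *)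

(* Defs.v *)
From HB Require Import structures.
From mathcomp Require Import all_boot all_order all_algebra.
From mathcomp Require Import all_classical all_reals all_analysis.
Set Implicit Arguments. Unset Strict Implicit. Unset Printing Implicit Defensive.
Import Order.TTheory GRing.Theory Num.Theory numFieldTopology.Exports numFieldNormedType.Exports.
Local Open Scope classical_set_scope.
Local Open Scope ring_scope.

Section Defs.
Variables (R : realType) (n : nat).
Local Notation V := 'rV[R]_n.

Definition is_inner_product (ip : V -> V -> R) : Prop :=
  [/\ (forall x y, ip x y = ip y x),
      (forall a x y z, ip (a *: x + y) z = a * ip x z + ip y z)
    & (forall x, x != 0 -> 0 < ip x x)].

Definition is_norm (nrm : V -> R) : Prop :=
  [/\ (forall x, 0 <= nrm x),
      (forall x, nrm x = 0 -> x = 0),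
      (forall a x, nrm (a *: x) = `|a| * nrm x)
    & (forall x y, nrm (x + y) <= nrm x + nrm y)].

Definition dnorm (ip : V -> V -> R) (nrm : V -> R) (y : V) : R :=
  sup [set ip y x | x in [set x | nrm x <= 1]].

Definition convex_set (X : set V) : Prop :=
  forall x y (t : R), X x -> X y -> 0 <= t <= 1 -> X (t *: x + (1 - t) *: y).

Definition convex_on (X : set V) (f : V -> R) : Prop :=
  forall x y (t : R), X x -> X y -> 0 <= t <= 1 ->
    f (t *: x + (1 - t) *: y) <= t * f x + (1 - t) * f y.

Definition Xo (ip : V -> V -> R) (X : set V) (omega : V -> R) : set V :=
  [set x | X x /\ exists g : V, forall z, X z -> omega x + ip g (z - x) <= omega z].

(* distance generating function with modulus alpha w.r.t. nrm; gomega is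
   the gradient of omega on X^o (a continuous selection of subgradients) *)
Definition is_dgf (ip : V -> V -> R) (nrm : V -> R) (X : set V)
    (omega : V -> R) (gomega : V -> V) (alpha : R) : Prop :=
  [/\ 0 < alpha,
      convex_on X omega,
      {within X, continuous omega}
    & convex_set (Xo ip X omega)] /\
  [/\ (forall x, Xo ip X omega x ->
         forall z, X z -> omega x + ip (gomega x) (z - x) <= omega z),
      {within Xo ip X omega, continuous gomega}
    & (forall x x', Xo ip X omega x -> Xo ip X omega x' ->
         alpha * nrm (x' - x) ^+ 2 <= ip (gomega x' - gomega x) (x' - x))].

Definition Vdist (ip : V -> V -> R) (omega : V -> R) (gomega : V -> V) (x z : V) : R :=
  omega z - omega x - ip (gomega x) (z - x).

Definition prox (ip : V -> V -> R) (X : set V) (omega : V -> R) (gomega : V -> V)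
    (x phi : V) : V :=
  xget 0 [set p | X p /\ forall z, X z ->
     ip phi p + Vdist ip omega gomega x p <= ip phi z + Vdist ip omega gomega x z].

Definition Rgam (ip : V -> V -> R) (X : set V) (omega : V -> R) (gomega : V -> V)
    (F : V -> V) (gamma : R) (x : V) : V :=
  gamma^-1 *: (x - prox ip X omega gomega x (gamma *: F x)).

(* gap functions, valued in the extended reals (the sup may be +oo) *)
Definition gap (ip : V -> V -> R) (X : set V) (F : V -> V) (x : V) : \bar R :=
  ereal_sup [set (ip (F x) (x - z))%:E | z in X].

Definition gapt (ip : V -> V -> R) (X : set V) (F : V -> V) (x phi : V) : \bar R :=
  ereal_sup [set (ip (F x + phi) (x - z))%:E | z in X].

Definition Dwx (X : set V) (omega : V -> R) : R :=
  Num.sqrt (sup (omega @` X) - inf (omega @` X)).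

Definition Omegawx (X : set V) (omega : V -> R) (alpha : R) : R :=
  Num.sqrt (2 / alpha) * Dwx X omega.

Definition bounded_wrt (nrm : V -> R) (X : set V) : Prop :=
  exists M : R, forall x, X x -> nrm x <= M.

End Defs.

(* Main.v *)
Require Import Defs.
From HB Require Import structures.
From mathcomp Require Import all_boot all_order all_algebra.
From mathcomp Require Import all_classical all_reals all_analysis.
From mathcomp Require Import ring lra.
Set Implicit Arguments. Unset Strict Implicit. Unset Printing Implicit Defensive.
Import Order.TTheory GRing.Theory Num.Theory numFieldTopology.Exports numFieldNormedType.Exports.
Local Open Scope classical_set_scope.
Local Open Scope ring_scope.

Section ED.
Variables (R : realType) (n : nat).
Local Notation V := 'rV[R]_n.

Lemma within_ed (W : normedModType R) (A : set V) (f : V -> W) x :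
  {within A, continuous f} -> A x -> forall e, 0 < e ->
  exists2 d, 0 < d & forall y, A y -> `|x - y| < d -> `|f x - f y| < e.
Proof.
move=> /subspace_continuousP fc Ax e e0.
have := fc x Ax; move=> /cvgrPdist_lt /(_ e e0).
rewrite /= nearE /within /= => /nbhs_normP [d d0 Hd].
exists d => // y Ay xy; exact: (Hd y xy Ay).
Qed.

Lemma ed_within (W : normedModType R) (A : set V) (f : V -> W) :
  (forall x, A x -> forall e, 0 < e ->
  exists2 d, 0 < d & forall y, A y -> `|x - y| < d -> `|f x - f y| < e) ->
  {within A, continuous f}.
Proof.
move=> H; apply/subspace_continuousP => x Ax.
apply/cvgrPdist_lt => e e0.
have [d d0 Hd] := H x Ax e e0.
rewrite /= nearE /within /=; apply/nbhs_ballP; exists d => // y /= xy Ay. rewrite -ball_normE in xy; exact: Hd.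
Qed.
End ED.

Section IP.
Variables (R : realType) (n : nat).
Local Notation V := 'rV[R]_n.
Variable ip : V -> V -> R.
Hypothesis Hip : is_inner_product ip.

Lemma ipC x y : ip x y = ip y x.
Proof. by case: Hip. Qed.
Lemma ip_lin a x y z : ip (a *: x + y) z = a * ip x z + ip y z.
Proof. by case: Hip. Qed.
Lemma ipDl x y z : ip (x + y) z = ip x z + ip y z.
Proof. by have := ip_lin 1 x y z; rewrite scale1r mul1r. Qed.
Lemma ip0l z : ip 0 z = 0.
Proof. have h := ipDl 0 0 z. rewrite addr0 in h. apply: (addrI (ip 0 z)); by rewrite addr0 -h. Qed.
Lemma ipZl a x z : ip (a *: x) z = a * ip x z.
Proof. by rewrite -[a *: x]addr0 ip_lin ip0l addr0. Qed.
Lemma ipNl x z : ip (- x) z = - ip x z.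
Proof. by rewrite -scaleN1r ipZl mulN1r. Qed.
Lemma ipBl x y z : ip (x - y) z = ip x z - ip y z.
Proof. by rewrite ipDl ipNl. Qed.
Lemma ipDr x y z : ip z (x + y) = ip z x + ip z y.
Proof. by rewrite ipC ipDl !(ipC z). Qed.
Lemma ip0r z : ip z 0 = 0.
Proof. by rewrite ipC ip0l. Qed.
Lemma ipZr a x z : ip z (a *: x) = a * ip z x.
Proof. by rewrite ipC ipZl ipC. Qed.
Lemma ipNr x z : ip z (- x) = - ip z x.
Proof. by rewrite ipC ipNl ipC. Qed.
Lemma ipBr x y z : ip z (x - y) = ip z x - ip z y.
Proof. by rewrite ipDr ipNr. Qed.
Lemma ip_suml I (r : seq I) (P : pred I) (f : I -> V) z :
  ip (\sum_(i <- r | P i) f i) z = \sum_(i <- r | P i) ip (f i) z.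
Proof. exact: (big_morph (fun x => ip x z) (fun x y => ipDl x y z) (ip0l z)). Qed.
Lemma ip_sumr I (r : seq I) (P : pred I) (f : I -> V) z :
  ip z (\sum_(i <- r | P i) f i) = \sum_(i <- r | P i) ip z (f i).
Proof. exact: (big_morph (fun x => ip z x) (fun x y => ipDr x y z) (ip0r z)). Qed.
Lemma ip_pos x : x != 0 -> 0 < ip x x.
Proof. by case: Hip => _ _; apply. Qed.
Lemma ip_ge0 x : 0 <= ip x x.
Proof. have [->|/ip_pos/ltW//] := eqVneq x 0; by rewrite ip0l. Qed.

Lemma coord_le (x : V) i : `|x 0 i| <= `|x|.
Proof.
rewrite [leRHS]/Num.Def.normr /= mx_normrE; apply/bigmax_geP; right => /=.
by exists (0, i).
Qed.

Definition Cip := \sum_(i < n) \sum_(j < n) `|ip (delta_mx 0 i) (delta_mx 0 j)|.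

Lemma Cip_ge0 : 0 <= Cip.
Proof. by apply: sumr_ge0 => i _; apply: sumr_ge0. Qed.

Lemma ip_bound x y : `|ip x y| <= Cip * `|x| * `|y|.
Proof.
rewrite {1}(row_sum_delta x) {1}(row_sum_delta y) ip_suml.
under eq_bigr => i _ do rewrite ipZl ip_sumr.
rewrite /Cip mulr_suml mulr_suml.
apply: le_trans (ler_norm_sum _ _ _) _; apply: ler_sum => i _.
rewrite normrM mulr_suml mulr_suml.
rewrite (le_trans (ler_wpM2l (normr_ge0 _) (ler_norm_sum _ _ _))) //.
rewrite mulr_sumr; apply: ler_sum => j _.
rewrite ipZr normrM.
have h1 := coord_le x i; have h2 := coord_le y j.
rewrite mulrA [X in _ <= X]mulrC !mulrA [_ * `|x|]mulrC.
rewrite mulrA; apply: ler_wpM2r => //.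
by apply: ler_pM.
Qed.
End IP.

Section S.
Variables (R : realType) (n : nat).
Local Notation V := 'rV[R]_n.

Lemma bounded_ball (A : set V) M : (forall x, A x -> `|x| <= M) -> bounded_set A.
Proof.
move=> H; exists M; split; first by rewrite num_real.
by move=> N MN x Ax; apply: le_trans (H x Ax) (ltW MN).
Qed.

Lemma sphere_lb (f : V -> R) : continuous f -> (forall v, `|v| = 1 -> 0 < f v) ->
  exists2 c, 0 < c & forall v, `|v| = 1 -> c <= f v.
Proof.
move=> fc fp.
have [[v0 v01]|S0] := pselect (exists v : V, `|v| = 1); last first.
  by exists 1 => // v v1; exfalso; apply: S0; exists v.
have cS : compact [set v : V | `|v| = 1].
  apply: bounded_closed_compact.
    by apply: (@bounded_ball _ 1) => x /= ->.
  have -> : [set v : V | `|v| = 1] = (fun v : V => `|v|) @^-1` [set 1].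
    by [].
  apply: preimage_closed; last exact: closed_eq.
  by move=> x _; apply: norm_continuous.
have [c cS' cmin] := compact_EVT_min (ex_intro _ v0 v01) cS (@continuous_subspaceT _ _ [set v : V | `|v| = 1] f fc).
exists (f c); first by apply: fp; rewrite inE in cS'.
by move=> v v1; apply: cmin; rewrite inE.
Qed.

Lemma cont_of_bound (f : V -> R) :
  (forall x, exists K, forall y, `|x - y| <= 1 -> `|f x - f y| <= K * `|x - y|) ->
  continuous f.
Proof.
move=> H x; apply/(@cvgrPdist_lt _ _ _ (nbhs (x : V)) (nbhs_filter (x : V)) f (f x)) => e e0.
have [K HK] := H x.
pose d := Num.min 1 (e / (`|K| + 1)).
have Kp : 0 < `|K| + 1 by rewrite ltr_pwDr // normr_ge0.
have d0 : 0 < d by rewrite lt_min ltr01 divr_gt0.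
apply/nbhs_ballP; exists d => // y /=; rewrite -ball_normE /= => xy.
have xy1 : `|x - y| <= 1 by apply: ltW; apply: lt_le_trans xy _; rewrite ge_min lexx.
apply: le_lt_trans (HK y xy1) _.
apply: le_lt_trans (ler_wpM2r (normr_ge0 _) (ler_norm K)) _.
have : `|x - y| < e / (`|K| + 1) by apply: lt_le_trans xy _; rewrite ge_min lexx orbT.
rewrite ltr_pdivlMr // => h; apply: le_lt_trans h; rewrite [X in X <= _]mulrC; apply: ler_wpM2l => //.
by rewrite lerDl.
Qed.

End S.

Section N.
Variables (R : realType) (n : nat).
Local Notation V := 'rV[R]_n.
Variable nrm : V -> R.
Hypothesis Hn : is_norm nrm.

Lemma nrm_ge0 x : 0 <= nrm x. Proof. by case: Hn. Qed.
Lemma nrm_eq0 x : nrm x = 0 -> x = 0. Proof. by case: Hn => _ h _ _; apply: h. Qed.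
Lemma nrmZ a x : nrm (a *: x) = `|a| * nrm x. Proof. by case: Hn => _ _ h _; apply: h. Qed.
Lemma nrmD x y : nrm (x + y) <= nrm x + nrm y. Proof. by case: Hn => _ _ _ h; apply: h. Qed.
Lemma nrm0 : nrm 0 = 0. Proof. by rewrite -(scale0r (0 : V)) nrmZ normr0 mul0r. Qed.
Lemma nrmN x : nrm (- x) = nrm x. Proof. by rewrite -scaleN1r nrmZ normrN normr1 mul1r. Qed.
Lemma nrmB x y : nrm (x - y) = nrm (y - x). Proof. by rewrite -nrmN opprB. Qed.
Lemma nrm_sum I (r : seq I) (P : pred I) (f : I -> V) :
  nrm (\sum_(i <- r | P i) f i) <= \sum_(i <- r | P i) nrm (f i).
Proof.
elim/big_rec2: _ => [|i a b _ h]; first by rewrite nrm0.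
by apply: le_trans (nrmD _ _) _; rewrite lerD2l.
Qed.

Definition Cn := \sum_(i < n) nrm (delta_mx 0 i).
Lemma nrm_ub x : nrm x <= Cn * `|x|.
Proof.
rewrite {1}(row_sum_delta x); apply: le_trans (nrm_sum _ _ _) _.
rewrite /Cn mulr_suml; apply: ler_sum => i _; rewrite nrmZ mulrC.
by apply: ler_wpM2l; [apply: nrm_ge0 | apply: coord_le].
Qed.

Lemma nrm_cont : continuous nrm.
Proof.
apply: cont_of_bound => x; exists Cn => y _.
apply: le_trans (nrm_ub (x - y)).
have h1 := nrmD (x - y) y; rewrite subrK in h1.
have h2 := nrmD (y - x) x; rewrite subrK nrmB in h2.
rewrite ler_norml; apply/andP; split; lra.
Qed.

Lemma nrm_lb : exists2 c, 0 < c & forall v, c * `|v| <= nrm v.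
Proof.
have hp : forall v : V, `|v| = 1 -> 0 < nrm v.
  move=> v v1; rewrite lt_def nrm_ge0 andbT; apply/eqP => /nrm_eq0 v00.
  by move: v1; rewrite v00 normr0 => /eqP; rewrite eq_sym oner_eq0.
have [c c0 hc] := sphere_lb nrm_cont hp.
exists c => // v.
have [->|v0] := eqVneq v 0; first by rewrite normr0 mulr0 nrm0.
have nv : 0 < `|v| by rewrite normr_gt0.
have : `| `|v|^-1 *: v| = 1.
  by rewrite normrZ normrV ?unitfE ?normr_eq0 // normr_id mulVf // normr_eq0.
move=> /hc; rewrite nrmZ normrV ?unitfE ?normr_eq0 // normr_id.
by rewrite ler_pdivlMl // mulrC.
Qed.
End N.

Section Q.
Variables (R : realType) (n : nat).
Local Notation V := 'rV[R]_n.
Variable ip : V -> V -> R.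
Hypothesis Hip : is_inner_product ip.

Lemma ipq_cont : continuous (fun v => ip v v).
Proof.
apply: cont_of_bound => x; exists (Cip ip * (2 * `|x| + 1)) => y xy1.
have e : ip x x - ip y y = ip (x - y) x + ip y (x - y).
  by rewrite (ipBl Hip) (ipBr Hip) (ipC Hip y x); lra.
rewrite e; apply: le_trans (ler_normD _ _) _.
have h1 := ip_bound Hip (x - y) x; have h2 := ip_bound Hip y (x - y).
have hy : `|y| <= `|x| + 1.
  have := ler_normD x (y - x); rewrite addrC subrK distrC; lra.
have C0 := Cip_ge0 ip.
have nx := normr_ge0 x; have nxy := normr_ge0 (x - y).
have : Cip ip * `|y| * `|x - y| <= Cip ip * (`|x| + 1) * `|x - y|.
  by apply: ler_wpM2r => //; apply: ler_wpM2l.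
nra.
Qed.

Lemma ip_lb : exists2 c, 0 < c & forall v, c * `|v| ^+ 2 <= ip v v.
Proof.
have hp : forall v : V, `|v| = 1 -> 0 < ip v v.
  move=> v v1; apply: (ip_pos Hip); apply/eqP => v0.
  by move: v1; rewrite v0 normr0 => /eqP; rewrite eq_sym oner_eq0.
have [c c0 hc] := sphere_lb ipq_cont hp.
exists c => // v.
have [->|v0] := eqVneq v 0; first by rewrite normr0 expr0n /= mulr0 (ip0l Hip).
have nv : 0 < `|v| by rewrite normr_gt0.
have : `| `|v|^-1 *: v| = 1.
  by rewrite normrZ normrV ?unitfE ?normr_eq0 // normr_id mulVf // normr_eq0.
move=> /hc; rewrite (ipZl Hip) (ipZr Hip) mulrA -expr2 exprVn.
by rewrite ler_pdivlMl ?exprn_gt0 // mulrC.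
Qed.
End Q.

Section M.
Variables (R : realType) (n : nat).
Local Notation V := 'rV[R]_n.
Variable ip : V -> V -> R.
Hypothesis Hip : is_inner_product ip.

Lemma exists_min (X : set V) (h : V -> R) (u v : V) (c0 k : R) :
  X !=set0 -> closed X -> {within X, continuous h} -> 0 < k ->
  (forall z, X z -> c0 + ip u z + k * `|z - v| ^+ 2 <= h z) ->
  exists p, X p /\ forall z, X z -> h p <= h z.
Proof.
move=> [x0 Xx0] Xcl hc k0 hlb.
pose B := Cip ip * `|u|.
have B0 : 0 <= B by rewrite mulr_ge0 ?Cip_ge0.
pose D := h x0 - c0 + B * `|v|.
pose S := (B + `|D|) / k + 1.
pose r := `|v| + S.
have far : forall z, X z -> r < `|z| -> h x0 < h z.
  move=> z Xz rz.
  pose s := `|z| - `|v|.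
  have sS : S < s by rewrite /s ltrBrDl.
  have kS : k * S = B + `|D| + k by rewrite /S; field; rewrite gt_eqF.
  have ks : k * s > B + `|D| + k by rewrite -kS ltr_pM2l.
  have Sge1 : 1 <= S by rewrite /S lerDr divr_ge0 // ?addr_ge0 // ltW.
  have s1 : 1 < s by apply: le_lt_trans sS.
  have zv : s <= `|z - v|.
    by rewrite /s; apply: le_trans (ler_dist_dist _ _); apply: ler_norm.
  have zv2 : s ^+ 2 <= `|z - v| ^+ 2 by rewrite lerXn2r // ?nnegrE; lra.
  have hu : - (B * `|z|) <= ip u z.
    have := ip_bound Hip u z; rewrite -/B => hb.
    by have := ler_norm (ip u z); rewrite ler_norml in hb; case/andP: hb.
  have := hlb z Xz.
  have Dle := ler_norm D.
  have D0 := normr_ge0 D.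
  have prod : 0 <= (s - 1) * (k * s - B) by apply: mulr_ge0; lra.
  rewrite /D in Dle.
  have nz : `|z| = s + `|v| by rewrite /s subrK.
  rewrite nz in hu.
  nra.
pose A := X `&` [set z : V | `|z| <= r].
have Ax0 : A x0.
  split => //=; rewrite leNgt; apply/negP => /(far x0 Xx0); by rewrite ltxx.
have cA : compact A.
  apply: bounded_closed_compact.
    by apply: (@bounded_ball _ _ _ r) => z [].
  apply: closedI => //.
  have -> : [set z : V | `|z| <= r] = (fun z : V => `|z|) @^-1` [set y | y <= r] by [].
  apply: preimage_closed; last exact: closed_le.
  by move=> x _; apply: norm_continuous.
have [p pA pmin] := compact_EVT_min (ex_intro _ x0 Ax0) cA
  (continuous_subspaceW (@subIsetl _ X _) hc).
rewrite inE in pA; case: pA => Xp pr.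
exists p; split => // z Xz.
have [zr|rz] := leP `|z| r; first by apply: pmin; rewrite inE.
apply: le_trans (ltW (far z Xz rz)); apply: pmin; rewrite inE.
exact: Ax0.
Qed.
End M.

Section L.
Variables (R : realType) (n : nat).
Local Notation V := 'rV[R]_n.

Definition LL (f : V -> R) := forall x, exists K, forall y,
  `|x - y| <= 1 -> `|f x - f y| <= K * `|x - y|.

Lemma LL_add f g : LL f -> LL g -> LL (fun z => f z + g z).
Proof.
move=> hf hg x; have [K1 h1] := hf x; have [K2 h2] := hg x.
exists (K1 + K2) => y xy; rewrite mulrDl.
have -> : f x + g x - (f y + g y) = (f x - f y) + (g x - g y) by ring.
by apply: le_trans (ler_normD _ _) _; apply: lerD; [apply: h1 | apply: h2].
Qed.

Lemma LL_scale c f : LL f -> LL (fun z => c * f z).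
Proof.
move=> hf x; have [K h] := hf x; exists (`|c| * K) => y xy.
by rewrite -mulrBr normrM -mulrA ler_wpM2l // h.
Qed.

Lemma LL_cst c : LL (fun _ => c).
Proof. by move=> x; exists 0 => y _; rewrite subrr normr0 mul0r. Qed.

Lemma within_add_LL (A : set V) f g : {within A, continuous f} -> LL g ->
  {within A, continuous (fun z => f z + g z)}.
Proof.
move=> fc gl; have gc := cont_of_bound gl.
have gw : {within A, continuous g} by apply: continuous_subspaceT.
apply: ed_within => x Ax e e0.
have e2 : 0 < e / 2 by rewrite divr_gt0.
have [d1 d10 h1] := within_ed fc Ax e2.
have [d2 d20 h2] := within_ed gw Ax e2.
exists (Num.min d1 d2); first by rewrite lt_min d10 d20.
move=> y Ay; rewrite lt_min => /andP[y1 y2].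
have -> : f x + g x - (f y + g y) = (f x - f y) + (g x - g y) by ring.
apply: le_lt_trans (ler_normD _ _) _.
have := h1 y Ay y1; have := h2 y Ay y2; lra.
Qed.

Variable ip : V -> V -> R.
Hypothesis Hip : is_inner_product ip.

Lemma LL_ip u p : LL (fun z => ip u (z - p)).
Proof.
move=> x; exists (Cip ip * `|u|) => y _.
rewrite -(ipBr Hip) (_ : x - p - (y - p) = x - y); last by rewrite opprB addrA subrK.
exact: ip_bound.
Qed.

Lemma ip_sqdiff a b : ip a a - ip b b = ip (a - b) a + ip b (a - b).
Proof. rewrite (ipBl Hip) (ipBr Hip) (ipC Hip b a); lra. Qed.

Lemma LL_q w : LL (fun z => ip (z - w) (z - w)).
Proof.
move=> x; exists (Cip ip * (2 * `|x - w| + 1)) => y xy1.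
set a := x - w; set b := y - w.
have ab : a - b = x - y by rewrite /a /b opprB addrA subrK.
rewrite ip_sqdiff ab; apply: le_trans (ler_normD _ _) _.
have h1 := ip_bound Hip (x - y) a; have h2 := ip_bound Hip b (x - y).
have hy : `|b| <= `|a| + 1.
  have := ler_normD a (b - a); rewrite addrC subrK (distrC b a) ab; lra.
have C0 := Cip_ge0 ip.
have nx := normr_ge0 a; have nxy := normr_ge0 (x - y).
have : Cip ip * `|b| * `|x - y| <= Cip ip * (`|a| + 1) * `|x - y|.
  by apply: ler_wpM2r => //; apply: ler_wpM2l.
nra.
Qed.

Variable nrm : V -> R.
Hypothesis Hn : is_norm nrm.

Lemma LL_nrm2 w : LL (fun z => nrm (z - w) ^+ 2).
Proof.
move=> x; exists (Cn nrm * (2 * nrm (x - w) + Cn nrm)) => y xy1.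
set a := nrm (x - w); set b := nrm (y - w).
have hab : `|a - b| <= Cn nrm * `|x - y|.
  have := nrm_cont Hn; move=> _.
  apply: le_trans (nrm_ub Hn (x - y)).
  have h1 := nrmD Hn (x - y) (y - w).
  have h2 := nrmD Hn (y - x) (x - w).
  rewrite (_ : x - y + (y - w) = x - w) in h1; last by rewrite addrA subrK.
  rewrite (_ : y - x + (x - w) = y - w) in h2; last by rewrite addrA subrK.
  rewrite (nrmB Hn y x) in h2.
  rewrite ler_norml; apply/andP; split; rewrite /a /b; lra.
have C0 : 0 <= Cn nrm by apply: sumr_ge0 => i _; apply: nrm_ge0.
have a0 : 0 <= a by apply: nrm_ge0.
have b0 : 0 <= b by apply: nrm_ge0.
have nxy := normr_ge0 (x - y).
have -> : a ^+ 2 - b ^+ 2 = (a - b) * (a + b) by ring.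
rewrite normrM.
have hb : b <= a + Cn nrm.
  move: hab; rewrite ler_norml => /andP[h _].
  have : Cn nrm * `|x - y| <= Cn nrm * 1 by apply: ler_wpM2l.
  lra.
have hab2 : `|a + b| <= 2 * a + Cn nrm by rewrite ger0_norm ?addr_ge0 //; lra.
have := normr_ge0 (a - b).
have := normr_ge0 (a + b).
nra.
Qed.
End L.

Lemma cvx_sub (R : realType) n t (z p : 'rV[R]_n) : (t *: z + (1 - t) *: p) - p = t *: (z - p).
Proof. by apply/rowP => i; rewrite !mxE; ring. Qed.

Lemma geo_small (R : realType) (e : R) : 0 < e -> exists k, (2^-1 : R) ^+ k < e.
Proof.
move=> e0; exists (Num.Def.archi_bound e^-1).
set k := Num.Def.archi_bound e^-1.
have h1 : e^-1 < k%:R by apply: archi_boundP; rewrite invr_ge0 ltW.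
have h2 : (k%:R : R) < 2 ^+ k.
  by rewrite -natrX ltr_nat; apply: ltn_expl.
rewrite exprVn -(invrK e) ltf_pV2 ?posrE ?exprn_gt0 ?invr_gt0 //.
exact: lt_trans h2.
Qed.

Lemma small_lim (R : realType) (a b : R) : 0 <= b ->
  (forall t, 0 < t <= 1 -> a <= t * b) -> a <= 0.
Proof.
move=> b0 H; rewrite leNgt; apply/negP => a0.
have d0 : 0 < a + b + 1 by lra.
have := H (a / (a + b + 1)).
rewrite divr_gt0 //= ler_pdivrMr // mul1r.
have -> : a + b + 1 >= a by lra.
move=> /(_ isT).
rewrite mulrAC ler_pdivlMr // => h.
nra.
Qed.

Section DGF.
Variables (R : realType) (n : nat).
Local Notation V := 'rV[R]_n.
Variables (ip : V -> V -> R) (nrm : V -> R) (X : set V) (omega : V -> R)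
  (gomega : V -> V) (alpha : R).
Hypotheses (Hip : is_inner_product ip) (Hn : is_norm nrm) (Xcl : closed X)
  (Xcv : Defs.convex_set X) (Hd : is_dgf ip nrm X omega gomega alpha).
Local Notation Xo' := (Xo ip X omega).

Lemma alpha_gt0 : 0 < alpha. Proof. by case: Hd => [[h _ _ _] _]; exact: h. Qed.
Lemma om_conv : convex_on X omega. Proof. by case: Hd => [[_ h _ _] _]; exact: h. Qed.
Lemma om_cont : {within X, continuous omega}. Proof. by case: Hd => [[_ _ h _] _]; exact: h. Qed.
Lemma Xo_conv : Defs.convex_set Xo'. Proof. by case: Hd => [[_ _ _ h] _]; exact: h. Qed.
Lemma subgrad y z : Xo' y -> X z -> omega y + ip (gomega y) (z - y) <= omega z.
Proof. move=> Hy Hz; case: Hd => _ [h _ _]; exact: h _ Hy _ Hz. Qed.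
Lemma g_cont : {within Xo', continuous gomega}. Proof. by case: Hd => _ [_ h _]; exact: h. Qed.
Lemma g_mono y z : Xo' y -> Xo' z ->
  alpha * nrm (z - y) ^+ 2 <= ip (gomega z - gomega y) (z - y).
Proof. move=> Hy Hz; case: Hd => _ [_ _ h]; exact: h _ _ Hy Hz. Qed.
Lemma XoX y : Xo' y -> X y. Proof. by case. Qed.

Lemma min_Xo s p : X p -> (forall z, X z -> ip s p + omega p <= ip s z + omega z) ->
  Xo' p.
Proof.
move=> Xp H; split => //; exists (- s) => z Xz.
by have := H z Xz; rewrite (ipNl Hip) (ipBr Hip); lra.
Qed.

Lemma opt_Xo s p : X p -> (forall z, X z -> ip s p + omega p <= ip s z + omega z) ->
  forall z, Xo' z -> 0 <= ip (s + gomega p) (z - p).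
Proof.
move=> Xp H z Xoz.
have Xop := min_Xo Xp H.
have step : forall t, 0 < t <= 1 ->
    0 <= ip (s + gomega (t *: z + (1 - t) *: p)) (z - p).
  move=> t /andP[t0 t1].
  set zt := t *: z + (1 - t) *: p.
  have Xozt : Xo' zt by apply: Xo_conv => //; rewrite ltW.
  have h1 := H zt (XoX Xozt).
  have h2 := subgrad Xozt Xp.
  have e1 : p - zt = - (t *: (z - p)) by rewrite -cvx_sub opprB.
  rewrite e1 (ipNr Hip) (ipZr Hip) in h2.
  have e2 : ip s zt = ip s p + t * ip s (z - p).
    by rewrite -(ipZr Hip) -cvx_sub -/zt (ipBr Hip); ring.
  rewrite e2 in h1.
  rewrite (ipDl Hip).
  have : 0 <= t * (ip s (z - p) + ip (gomega zt) (z - p)) by lra.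
  by rewrite pmulr_rge0.
rewrite leNgt; apply/negP => neg.
set eta := - ip (s + gomega p) (z - p).
have eta0 : 0 < eta by rewrite /eta oppr_gt0.
set M := Cip ip * `|z - p|.
have M0 : 0 <= M by rewrite mulr_ge0 ?Cip_ge0.
have e0 : 0 < eta / (M + 1) by rewrite divr_gt0 // ltr_wpDl.
have [d d0 hd] := within_ed g_cont Xop e0.
set t := Num.min 1 (d / (`|z - p| + 1)).
have np1 : 0 < `|z - p| + 1 by rewrite ltr_wpDl.
have t0 : 0 < t by rewrite lt_min ltr01 divr_gt0.
have t1 : t <= 1 by rewrite ge_min lexx.
have := step t; rewrite t0 t1 => /(_ isT).
set zt := t *: z + (1 - t) *: p.
have Xozt : Xo' zt by apply: Xo_conv => //; rewrite ltW.
have dist : `|p - zt| < d.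
  rewrite -opprB cvx_sub normrN normrZ ger0_norm; last exact: ltW.
  have : t <= d / (`|z - p| + 1) by rewrite ge_min lexx orbT.
  rewrite ler_pdivlMr // => h.
  have nz := normr_ge0 (z - p).
  apply: lt_le_trans h.
  by rewrite ltr_pM2l // ltrDl.
have hg := hd zt Xozt dist.
have eq : s + gomega zt = (s + gomega p) + (gomega zt - gomega p).
  by apply/rowP => i; rewrite !mxE; ring.
rewrite eq (ipDl Hip).
have hb := ip_bound Hip (gomega zt - gomega p) (z - p).
have hb' : `|ip (gomega zt - gomega p) (z - p)| <= M * `|gomega zt - gomega p|.
  by rewrite /M mulrAC.
have := ler_norm (ip (gomega zt - gomega p) (z - p)).
rewrite distrC in hg.
have hprod : 0 <= M * (eta / (M + 1) - `|gomega zt - gomega p|).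
  by apply: mulr_ge0 => //; lra.
have : eta / (M + 1) * M < eta.
  by rewrite mulrAC ltr_pdivrMr ?ltr_wpDl // ltr_pM2l // ltrDl.
have eeta : ip (s + gomega p) (z - p) = - eta by rewrite /eta opprK.
rewrite eeta; set E := eta / (M + 1) in hg hprod *; nra.
Qed.
End DGF.

Section DGF2.
Variables (R : realType) (n : nat).
Local Notation V := 'rV[R]_n.
Variables (ip : V -> V -> R) (nrm : V -> R) (X : set V) (omega : V -> R)
  (gomega : V -> V) (alpha : R).
Hypotheses (Hip : is_inner_product ip) (Hn : is_norm nrm) (Xcl : closed X)
  (Xcv : Defs.convex_set X) (Hd : is_dgf ip nrm X omega gomega alpha).
Local Notation Xo' := (Xo ip X omega).
Variable x0 : V.
Hypothesis Xox0 : Xo' x0.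

Lemma q_expand a b t : ip (a + t *: b) (a + t *: b) = ip a a + 2 * t * ip a b + t ^+ 2 * ip b b.
Proof.
rewrite !(ipDl Hip) !(ipDr Hip) !(ipZl Hip) !(ipZr Hip) (ipC Hip b a); ring.
Qed.

Lemma moreau w K : X w -> 0 < K ->
  exists y, Xo' y /\ omega y + K * ip (y - w) (y - w) <= omega w.
Proof.
move=> Xw K0.
have [cq cq0 hcq] := ip_lb Hip.
pose h := fun z => omega z + K * ip (z - w) (z - w).
have hc : {within X, continuous h}.
  by apply: within_add_LL (om_cont Hd) (LL_scale _ (LL_q Hip w)).
have [y [Xy ymin]] : exists p, X p /\ forall z, X z -> h p <= h z.
  apply: (@exists_min _ _ _ Hip X h (gomega x0) w (omega x0 - ip (gomega x0) x0) (K * cq)).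
  - by exists w.
  - exact: Xcl.
  - exact: hc.
  - by rewrite mulr_gt0.
  move=> z Xz; rewrite /h.
  have := subgrad Hd Xox0 Xz; rewrite (ipBr Hip) => h1.
  have : K * (cq * `|z - w| ^+ 2) <= K * ip (z - w) (z - w).
    by apply: ler_wpM2l; [exact: ltW | exact: hcq].
  lra.
exists y; split; last first.
  by have := ymin w Xw; rewrite /h subrr (ip0l Hip) mulr0 addr0.
split => //; exists (2 * K *: (w - y)) => z Xz.
pose a := omega y - omega z - 2 * K * ip (y - w) (z - y).
suff : a <= 0.
  rewrite /a (ipZl Hip) -(opprB y w) (ipNl Hip); lra.
apply: (@small_lim _ a (K * ip (z - y) (z - y))).
  by apply: mulr_ge0; [exact: ltW | exact: ip_ge0].
move=> t /andP[t0 t1].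
have Xzt : X (t *: z + (1 - t) *: y) by apply: Xcv => //; rewrite ltW.
have := ymin _ Xzt; rewrite /h.
have -> : t *: z + (1 - t) *: y - w = (y - w) + t *: (z - y).
  by apply/rowP => i; rewrite !mxE; ring.
rewrite q_expand.
have := om_conv Hd Xz Xy (t:=t); rewrite ltW // t1 => /(_ isT) hcv.
move=> hm.
have : t * a <= t * (t * (K * ip (z - y) (z - y))).
  rewrite /a; lra.
by rewrite ler_pM2l.
Qed.

Lemma dense w e : X w -> 0 < e -> exists y, Xo' y /\ `|w - y| < e.
Proof.
move=> Xw e0.
have [cq cq0 hcq] := ip_lb Hip.
pose B := Cip ip * `|gomega x0|.
have B0 : 0 <= B by rewrite mulr_ge0 ?Cip_ge0.
pose C := omega w - omega x0 - ip (gomega x0) (w - x0).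
pose K := (`|C| / e + B + 1) / (cq * e).
have K0 : 0 < K.
  apply: divr_gt0; last by rewrite mulr_gt0.
  have := normr_ge0 C; have : 0 <= `|C| / e by apply: divr_ge0; [exact: normr_ge0 | exact: ltW].
  lra.
have [y [Xoy hy]] := moreau Xw K0.
exists y; split => //.
rewrite ltNge; apply/negP => er.
set r := `|w - y| in er.
have h1 : K * (cq * r ^+ 2) <= K * ip (y - w) (y - w).
  by apply: ler_wpM2l; [exact: ltW | rewrite /r distrC; exact: hcq].
have h2 := subgrad Hd Xox0 (XoX Xoy).
have e2 : ip (gomega x0) (y - x0) = ip (gomega x0) (y - w) + ip (gomega x0) (w - x0).
  by rewrite -(ipDr Hip); congr (ip _ _); apply/rowP => i; rewrite !mxE; ring.
have h3 : `|ip (gomega x0) (y - w)| <= B * r.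
  by rewrite /r distrC; apply: ip_bound.
have h4 := ler_norm (- ip (gomega x0) (y - w)); rewrite normrN in h4.
have KC : K * cq * e = `|C| / e + B + 1.
  by rewrite /K; field; rewrite !gt_eqF.
have r0 : 0 < r by apply: lt_le_trans er.
have hCe : `|C| <= `|C| / e * r.
  rewrite mulrAC ler_pdivlMr //; apply: ler_wpM2l => //; exact: normr_ge0.
have hKr : K * cq * e * r <= K * cq * r * r.
  have := mulr_ge0 (mulr_ge0 (ltW K0) (ltW cq0)) (ltW r0).
  have : e <= r by [].
  nra.
have hCC := ler_norm C.
rewrite KC in hKr.
have : K * (cq * r ^+ 2) = K * cq * r * r by rewrite expr2; ring.
have eC : C = omega w - omega x0 - ip (gomega x0) (w - x0) by [].
rewrite !mulrDl mul1r in hKr.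
move=> eK.
clear KC; clearbody r K C B.
have s1 : K * (cq * r ^+ 2) <= omega w - omega y by lra.
have s2 : omega w - omega y <= C - ip (gomega x0) (y - w) by lra.
have s3 : K * cq * r * r <= C + B * r by lra.
have s4 : `|C| + B * r + r <= K * cq * r * r by lra.
have s5 : r <= 0 by lra.
by have := lt_le_trans r0 s5; rewrite ltxx.
Qed.

Lemma ext_X (Phi : V -> R) : {within X, continuous Phi} ->
  (forall y, Xo' y -> 0 <= Phi y) -> forall z, X z -> 0 <= Phi z.
Proof.
move=> Pc H z Xz; rewrite leNgt; apply/negP => neg.
have e0 : 0 < - Phi z by rewrite oppr_gt0.
have [d d0 hd] := within_ed Pc Xz e0.
have [y [Xoy zy]] := dense Xz d0.
have := hd y (XoX Xoy) zy.
have := H y Xoy.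
have := ler_norm (Phi y - Phi z); rewrite distrC.
lra.
Qed.

Lemma opt_X s p : X p -> (forall z, X z -> ip s p + omega p <= ip s z + omega z) ->
  forall z, X z -> 0 <= ip (s + gomega p) (z - p).
Proof.
move=> Xp H; apply: (@ext_X (fun z => ip (s + gomega p) (z - p))).
  apply: continuous_subspaceT; apply: cont_of_bound; exact: LL_ip.
by move=> y Xoy; apply: (opt_Xo Hip Hd Xp H Xoy).
Qed.
End DGF2.

Section DGF3.
Variables (R : realType) (n : nat).
Local Notation V := 'rV[R]_n.
Variables (ip : V -> V -> R) (nrm : V -> R) (X : set V) (omega : V -> R)
  (gomega : V -> V) (alpha : R).
Hypotheses (Hip : is_inner_product ip) (Hn : is_norm nrm) (Xcl : closed X)
  (Xcv : Defs.convex_set X) (Hd : is_dgf ip nrm X omega gomega alpha).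
Local Notation Xo' := (Xo ip X omega).
Variable x0 : V.
Hypothesis Xox0 : Xo' x0.

Lemma sc_Xo_k k : forall y z, Xo' y -> Xo' z ->
  omega y + ip (gomega y) (z - y) + alpha / 2 * (1 - (2^-1) ^+ k) * nrm (z - y) ^+ 2
  <= omega z.
Proof.
elim: k => [|k IH] y z Xoy Xoz.
  rewrite expr0 subrr mulr0 mul0r addr0. have hh := subgrad Hd Xoy; exact: hh _ (XoX Xoz).
have h0 : 0 <= (2^-1 : R) <= 1.
  by rewrite invr_ge0 ler0n /= invf_le1 // ?ler1n.
set m := 2^-1 *: z + (1 - 2^-1) *: y.
have Xom : Xo' m by apply: (Xo_conv Hd).
have e1 : m - y = 2^-1 *: (z - y) by rewrite cvx_sub.
have e2 : z - m = 2^-1 *: (z - y).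
  by apply/rowP => i; rewrite /m !mxE; field.
have h1 := IH m z Xom Xoz; have h2 := IH y m Xoy Xom.
have h3 := g_mono Hd Xoy Xom.
rewrite e2 (ipZr Hip) (nrmZ Hn) in h1.
rewrite e1 (ipZr Hip) (nrmZ Hn) in h2.
rewrite e1 (ipZr Hip) (nrmZ Hn) (ipBl Hip) in h3.
rewrite exprS.
have a0 := alpha_gt0 Hd.
set hk := (2^-1 : R) ^+ k in h1 h2 *.
set N := nrm (z - y) in h1 h2 h3 *.
rewrite ger0_norm ?invr_ge0 ?ler0n // in h1 h2 h3.
nra.
Qed.

Lemma sc_Xo y z : Xo' y -> Xo' z ->
  omega y + ip (gomega y) (z - y) + alpha / 2 * nrm (z - y) ^+ 2 <= omega z.
Proof.
move=> Xoy Xoz.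
have hk := fun k => sc_Xo_k k Xoy Xoz.
pose D := omega z - omega y - ip (gomega y) (z - y).
have eD : D = omega z - omega y - ip (gomega y) (z - y) by [].
pose N := nrm (z - y) ^+ 2.
have eN : N = nrm (z - y) ^+ 2 by [].
have N0 : 0 <= N by rewrite exprn_ge0 // (nrm_ge0 Hn).
rewrite -eN in hk *.
clearbody D N.
have hk' : forall k, alpha / 2 * (1 - (2^-1) ^+ k) * N <= D.
  by move=> k; have := hk k; lra.
clear hk.
suff : alpha / 2 * N <= D by lra.
rewrite leNgt; apply/negP => neg.
have a0 := alpha_gt0 Hd.
have D0 : 0 <= D by have := hk' 0%N; rewrite expr0 subrr mulr0 mul0r.
pose A := alpha / 2 * N.
have eA : A = alpha / 2 * N by [].
rewrite -eA in neg; clearbody A.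
have aN : 0 < A by lra.
have de : 0 < (A - D) / A by apply: divr_gt0 => //; lra.
have [k hk2] := geo_small de.
have := hk' k.
move: hk2; rewrite ltr_pdivlMr // => hk2.
have -> : alpha / 2 * (1 - 2^-1 ^+ k) * N = A - 2^-1 ^+ k * A by rewrite eA; ring.
lra.
Qed.

Lemma sc_X y z : Xo' y -> X z ->
  omega y + ip (gomega y) (z - y) + alpha / 2 * nrm (z - y) ^+ 2 <= omega z.
Proof.
move=> Xoy Xz.
pose g := fun z => - omega y + ((-1) * ip (gomega y) (z - y) + (- (alpha / 2)) * nrm (z - y) ^+ 2).
have gl : LL g.
  apply: LL_add; first exact: LL_cst.
  by apply: LL_add; apply: LL_scale; [apply: LL_ip | apply: LL_nrm2].
have := ext_X Hip Xcl Xcv Hd Xox0 (within_add_LL (om_cont Hd) gl).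
move=> H.
have : 0 <= omega z + g z.
  apply: H Xz => w Xow; have := sc_Xo Xoy Xow; rewrite /g; lra.
rewrite /g; lra.
Qed.

Lemma prox_ex s : exists p, X p /\ forall z, X z -> ip s p + omega p <= ip s z + omega z.
Proof.
have [cn cn0 hcn] := nrm_lb Hn.
have LLs : LL (fun z => ip s z).
  move=> x; have [K hK] := LL_ip Hip s 0 x; exists K => y; by have := hK y; rewrite !subr0.
have hc := within_add_LL (om_cont Hd) LLs.
have a0 := alpha_gt0 Hd.
have hk : 0 < alpha / 2 * cn ^+ 2 by rewrite mulr_gt0 ?exprn_gt0 ?divr_gt0.
have hlb : forall z, X z -> (omega x0 - ip (gomega x0) x0) + ip (s + gomega x0) z
    + alpha / 2 * cn ^+ 2 * `|z - x0| ^+ 2 <= omega z + ip s z.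
  move=> z Xz.
  have h1 := sc_X Xox0 Xz.
  have h2 := hcn (z - x0).
  have h3 : (cn * `|z - x0|) ^+ 2 <= nrm (z - x0) ^+ 2.
    by rewrite lerXn2r // ?nnegrE ?mulr_ge0 ?(nrm_ge0 Hn) // ltW.
  have h4 : alpha / 2 * (cn * `|z - x0|) ^+ 2 <= alpha / 2 * nrm (z - x0) ^+ 2.
    by apply: ler_wpM2l => //; rewrite divr_ge0 // ltW.
  rewrite (ipDl Hip) (ipBr Hip) in h1 *.
  have -> : alpha / 2 * cn ^+ 2 * `|z - x0| ^+ 2 = alpha / 2 * (cn * `|z - x0|) ^+ 2 by ring.
  lra.
have [p [Xp pmin]] := exists_min Hip (ex_intro _ x0 (XoX Xox0)) Xcl hc hk hlb.
exists p; split => // z Xz; have := pmin z Xz; lra.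
Qed.
End DGF3.

Section DN.
Variables (R : realType) (n : nat).
Local Notation V := 'rV[R]_n.
Variables (ip : V -> V -> R) (nrm : V -> R).
Hypotheses (Hip : is_inner_product ip) (Hn : is_norm nrm).

Lemma dn_has_sup y : has_sup [set ip y x | x in [set x | nrm x <= 1]].
Proof.
split; first by exists (ip y 0), 0 => //=; rewrite (nrm0 Hn).
have [cn cn0 hcn] := nrm_lb Hn.
exists (Cip ip * `|y| / cn) => _ [x /= x1 <-].
have hx : `|x| <= cn^-1.
  rewrite -(ler_pM2l cn0) mulfV ?gt_eqF //.
  by apply: le_trans (hcn x) x1.
apply: le_trans (ler_norm _) _; apply: le_trans (ip_bound Hip y x) _.
rewrite -!mulrA; apply: ler_wpM2l; first exact: Cip_ge0.
by apply: ler_wpM2l.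
Qed.

Lemma dn_ub y x : nrm x <= 1 -> ip y x <= dnorm ip nrm y.
Proof. by move=> x1; apply: (sup_upper_bound (dn_has_sup y)); exists x. Qed.

Lemma dn_le y c : (forall x, nrm x <= 1 -> ip y x <= c) -> dnorm ip nrm y <= c.
Proof.
move=> H; apply: ge_sup; first by exists (ip y 0), 0 => //=; rewrite (nrm0 Hn).
by move=> _ [x /= x1 <-]; apply: H.
Qed.

Lemma dn_ge0 y : 0 <= dnorm ip nrm y.
Proof.
by have := dn_ub y (x := 0); rewrite (nrm0 Hn) (ip0r Hip) ler01 => /(_ isT).
Qed.

Lemma dn_ip y x : ip y x <= dnorm ip nrm y * nrm x.
Proof.
have [x0|xn0] := eqVneq (nrm x) 0.
  by rewrite (nrm_eq0 Hn x0) (ip0r Hip) (nrm0 Hn) mulr0.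
have nx : 0 < nrm x by rewrite lt_def xn0 (nrm_ge0 Hn).
have := dn_ub y (x := (nrm x)^-1 *: x).
rewrite (nrmZ Hn) ger0_norm ?invr_ge0 ?(nrm_ge0 Hn) // mulVf // lexx (ipZr Hip).
by move=> /(_ isT); rewrite ler_pdivrMl // mulrC.
Qed.

Lemma dn_abs y x : `|ip y x| <= dnorm ip nrm y * nrm x.
Proof.
rewrite ler_norml dn_ip andbT.
have := dn_ip y (- x); rewrite (ipNr Hip) (nrmN Hn); lra.
Qed.

Lemma dnD a b : dnorm ip nrm (a + b) <= dnorm ip nrm a + dnorm ip nrm b.
Proof.
apply: dn_le => x x1; rewrite (ipDl Hip).
have h1 := dn_ip a x; have h2 := dn_ip b x.
have := dn_ge0 a; have := dn_ge0 b; have := nrm_ge0 Hn x.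
nra.
Qed.

Lemma dnZ c a : dnorm ip nrm (c *: a) <= `|c| * dnorm ip nrm a.
Proof.
apply: dn_le => x x1; rewrite (ipZl Hip).
apply: le_trans (ler_norm _) _; rewrite normrM; apply: ler_wpM2l => //.
apply: le_trans (dn_abs a x) _.
have := dn_ge0 a; have := nrm_ge0 Hn x; nra.
Qed.
End DN.


Lemma cvx_conv (R : realType) (n : nat) (X : set 'rV[R]_n) :
  convex_set X -> Defs.convex_set X.
Proof.
move=> H x y t Xx Xy /andP[t0 t1].
have := H x y (Itv01 t0 t1); rewrite !inE => /(_ Xx Xy).
by [].
Qed.

Unset Implicit Arguments.
Theorem proposition3 (R : realType) (n : nat)
  (ip : 'rV[R]_n -> 'rV[R]_n -> R) (nrm : 'rV[R]_n -> R)
  (X : set 'rV[R]_n) (F : 'rV[R]_n -> 'rV[R]_n)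
  (omega : 'rV[R]_n -> R) (gomega : 'rV[R]_n -> 'rV[R]_n) (alpha : R) :
  is_inner_product ip -> is_norm nrm ->
  X !=set0 -> closed X -> convex_set X ->
  {within X, continuous F} ->
  is_dgf ip nrm X omega gomega alpha ->
  forall (x : 'rV[R]_n) (gamma : R),
    Xo ip X omega x -> 0 < gamma ->
    let xp := prox ip X omega gomega x (gamma *: F x) in
    let phi := F x - F xp + gamma^-1 *: (gomega xp - gomega x) in
    let Rg := Rgam ip X omega gomega F gamma x in
    (* (a) *)
    (gapt ip X F xp phi <= 0)%E /\
    (forall (Q L nu : R),
      (forall y z, Xo ip X omega y -> Xo ip X omega z ->
         dnorm ip nrm (gomega y - gomega z) <= Q * nrm (y - z)) ->
      0 < nu <= 1 -> 0 < L ->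
      (forall y z, X y -> X z -> dnorm ip nrm (F y - F z) <= L * nrm (y - z) `^ nu) ->
      (* (b) *)
      dnorm ip nrm phi <= L * (gamma * nrm Rg) `^ nu + Q * nrm Rg /\
      (* (c) *)
      (bounded_wrt nrm X ->
       (gap ip X F xp <=
        (2 * Omegawx X omega alpha * (L * gamma `^ nu * nrm Rg `^ nu + Q * nrm Rg))%:E)%E)).
Proof.
move=> Hip Hn X0 Xcl Xcv0 Fc Hd x gamma Xox g0 xp phi Rg.
have Xcv := cvx_conv Xcv0.
pose psi := gamma *: F x - gomega x.
have [p [Xp pmin]] := prox_ex Hip Hn Xcl Xcv Hd Xox psi.
have Pex : exists q, (fun q => X q /\ forall z, X z ->
     ip (gamma *: F x) q + Vdist ip omega gomega x q <=
     ip (gamma *: F x) z + Vdist ip omega gomega x z) q.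
  exists p; split => // z Xz; rewrite /Vdist.
  have := pmin z Xz; rewrite /psi !(ipBl Hip) !(ipBr Hip); lra.
have [Xxp xpmin] := xgetPex 0 Pex.
rewrite -/(prox ip X omega gomega x (gamma *: F x)) -/xp in Xxp xpmin.
have hmin : forall z, X z -> ip psi xp + omega xp <= ip psi z + omega z.
  move=> z Xz; have := xpmin z Xz; rewrite /Vdist /psi !(ipBl Hip) !(ipBr Hip); lra.
have Xoxp := min_Xo Hip Xxp hmin.
have opt := opt_X Hip Xcl Xcv Hd Xox Xxp hmin.
have key : F xp + phi = gamma^-1 *: (psi + gomega xp).
  by apply/rowP => i; rewrite /phi /psi !mxE; field; rewrite gt_eqF.
have ga : forall z, X z -> ip (F xp + phi) (xp - z) <= 0.
  move=> z Xz; rewrite key (ipZl Hip) -opprB (ipNr Hip).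
  have gi : 0 < gamma^-1 by rewrite invr_gt0.
  have := opt z Xz; nra.
split.
  by apply: ge_ereal_sup => _ [z Xz <-]; rewrite lee_fin; apply: ga.
move=> Q L nu Hg /andP[nu0 nu1] L0 HF.
have eRg : nrm Rg = gamma^-1 * nrm (x - xp).
  by rewrite /Rg /Rgam (nrmZ Hn) ger0_norm // invr_ge0 ltW.
have gRg : gamma * nrm Rg = nrm (x - xp).
  by rewrite eRg mulrA mulfV ?gt_eqF // mul1r.
have hb : dnorm ip nrm phi <= L * (gamma * nrm Rg) `^ nu + Q * nrm Rg.
  apply: le_trans (dnD Hip Hn _ _) _.
  apply: lerD.
    rewrite gRg; apply: HF; [exact: XoX Xox | exact: Xxp].
  apply: le_trans (dnZ Hip Hn _ _) _.
  have gi : 0 <= gamma^-1 by rewrite invr_ge0 ltW.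
  rewrite (ger0_norm gi) eRg (nrmB Hn) mulrCA.
  apply: ler_wpM2l => //.
  exact: Hg.
split => // Xbd.
have [p0 [Xp0 p0min]] := prox_ex Hip Hn Xcl Xcv Hd Xox 0.
have Xop0 := min_Xo Hip Xp0 p0min.
have opt0 := opt_X Hip Xcl Xcv Hd Xox Xp0 p0min.
have [M HM] := Xbd.
have [cn cn0 hcn] := nrm_lb Hn.
have cX : compact X.
  apply: bounded_closed_compact => //; apply: (@bounded_ball _ _ _ (M / cn)) => z Xz.
  by rewrite ler_pdivlMr // mulrC; apply: le_trans (hcn z) (HM z Xz).
have hsup : has_sup (omega @` X).
  apply: compact_has_sup; first by case: X0 => z Xz; exists (omega z), z.
  exact: continuous_compact (om_cont Hd) cX.
have hlb : has_lbound (omega @` X).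
  exists (omega p0) => _ [z Xz <-]; have := p0min z Xz; rewrite !(ip0l Hip); lra.
have supz : forall z, X z -> omega z <= sup (omega @` X).
  by move=> z Xz; apply: sup_upper_bound => //; exists z.
have infp : inf (omega @` X) <= omega p0 by apply: ge_inf => //; exists p0.
set Dl := sup (omega @` X) - inf (omega @` X).
have a0 := alpha_gt0 Hd.
have bnd : forall z, X z -> nrm (z - p0) <= Omegawx X omega alpha.
  move=> z Xz.
  have h1 := sc_X Hip Hn Xcl Xcv Hd Xox Xop0 Xz.
  have h2 := opt0 z Xz; rewrite add0r in h2.
  have h3 := supz z Xz.
  have h4 : nrm (z - p0) ^+ 2 <= 2 / alpha * Dl.
    rewrite -(ler_pM2l (_ : 0 < alpha / 2)) ?divr_gt0 //.
    have -> : alpha / 2 * (2 / alpha * Dl) = Dl by field; rewrite gt_eqF.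
    rewrite /Dl; lra.
  have ha : 0 <= 2 / alpha by rewrite divr_ge0 // ltW.
  rewrite /Omegawx /Dwx -/Dl -(sqrtrM _ ha).
  rewrite -[nrm (z - p0)](@ger0_norm _ (nrm (z - p0))) ?(nrm_ge0 Hn) // -sqrtr_sqr.
  rewrite ler_sqrt; first exact: h4.
  by apply: le_trans h4; rewrite exprn_ge0 // (nrm_ge0 Hn).
have bnd2 : forall z, X z -> nrm (xp - z) <= 2 * Omegawx X omega alpha.
  move=> z Xz.
  have := nrmD Hn (xp - p0) (p0 - z).
  rewrite (_ : xp - p0 + (p0 - z) = xp - z); last by apply/rowP => i; rewrite !mxE; ring.
  have := bnd xp Xxp; have := bnd z Xz; rewrite (nrmB Hn p0 z); lra.
apply: ge_ereal_sup => _ [z Xz <-]; rewrite lee_fin.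
have e1 : ip (F xp) (xp - z) = ip (F xp + phi) (xp - z) - ip phi (xp - z).
  by rewrite (ipDl Hip); ring.
rewrite e1.
have h1 := ga z Xz.
have h2 := dn_abs Hip Hn phi (xp - z).
have h3 := ler_norm (- ip phi (xp - z)); rewrite normrN in h3.
have h4 := bnd2 z Xz.
have h5 := dn_ge0 Hip Hn phi.
have h6 := nrm_ge0 Hn (xp - z).
have eb : L * (gamma * nrm Rg) `^ nu = L * gamma `^ nu * nrm Rg `^ nu.
  by rewrite powRM ?mulrA //; [exact: ltW | exact: nrm_ge0].
rewrite eb in hb.
set B := L * gamma `^ nu * nrm Rg `^ nu + Q * nrm Rg in hb *.
set O := Omegawx X omega alpha in h4 *.
nra.
Qed.
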